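(* In the hexagonal three-direction setting with the random model described in the context, let $k\ge1$, let $X=\sum_{r\in R}X_r$ be the number of zero measurements and $N_R^0=\mathbb{E}[X]=\sum_{r\in R}(1-|r|/|C|)^k$. Set $\overline{p}_d=1-\min_{r\in R}\frac{|r|}{|C|}=1-\frac{2(d+1)}{3d^2+1}$. Then for every $\delta>0$, \[ \Pr\big[|X-N_R^0|\ge\delta\big]\le 2\exp\Big(-\frac{1-\overline{p}_d^{\,2}}{18\,(1-\overline{p}_d^{\,2k})}\,\delta^2\Big). \]
   Context: Hexagonal setting. Let $d\ge 3$ be an odd integer. The set of cells is $C=\{(i_1,i_2)\in\mathbb{Z}^2 : |i_1|\le (d-1)/2,\ |i_2|\le (d-1)/2,\ |i_1+i_2|\le (d-1)/2\}$ (the cell centers are $i_1 d^1+i_2 d^2$ with $d^1=\tfrac12(\sqrt3,1)$, $d^2=(0,1)$, forming a hexagon), so $|C|=(3d^2+1)/4$. There are three directions of projection rays: $R_1$ consists of the $d$ rays $\{(i_1,i_2)\in C: i_1=a\}$, $R_2$ of the $d$ rays $\{(i_1,i_2)\in C: i_2=a\}$, and $R_3$ of the $d$ rays $\{(i_1,i_2)\in C: i_1+i_2=a\}$, for $a\in\{-(d-1)/2,\dots,(d-1)/2\}$; a ray is identified with the set of cells it meets, $|r|$ denotes its number of cells, and $R=R_1\cup R_2\cup R_3$, $|R|=3d$. Each cell $c$ lies on exactly one ray $r_i(c)\in R_i$ for each $i=1,2,3$. Random model: $k$ cells are drawn independently and uniformly from $C$ (with replacement; a cell may be drawn several times). For $r\in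 R$, $X_r\in\{0,1\}$ equals $1$ (a ''zero measurement'') iff none of the drawn cells lies on $r$. *)

(* Defs.v *)
From Stdlib Require Import Reals ZArith.
From mathcomp Require Import all_boot.

Set Implicit Arguments.
Unset Strict Implicit.
Unset Printing Implicit Defensive.

Definition hh (d : nat) : Z := Z.of_nat ((d - 1)./2).

(* coordinate of index i : 'I_d, shifted to range over {-h,...,h} *)
Definition crd (d : nat) (i : 'I_d) : Z := (Z.of_nat (nat_of_ord i) - hh d)%Z.

(* |i1| <= h and |i2| <= h hold automatically for indices in 'I_d (d odd);
   the remaining hexagon constraint is |i1 + i2| <= h. *)
Definition inC (d : nat) (x : 'I_d * 'I_d) : bool :=
  [&& (Z.abs (crd x.1) <=? hh d)%Z, (Z.abs (crd x.2) <=? hh d)%Z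
    & (Z.abs (crd x.1 + crd x.2) <=? hh d)%Z].

Definition cell (d : nat) := {x : 'I_d * 'I_d | inC x}.

(* Rays: direction (0,1,2 ~ R_1,R_2,R_3) and offset a (via crd) *)
Definition ray (d : nat) := ('I_3 * 'I_d)%type.

Definition on_ray (d : nat) (r : ray d) (c : cell d) : bool :=
  let x := val c in
  match nat_of_ord r.1 with
  | 0 => Z.eqb (crd x.1) (crd r.2)
  | 1 => Z.eqb (crd x.2) (crd r.2)
  | _ => Z.eqb (crd x.1 + crd x.2)%Z (crd r.2)
  end.

Definition ray_size (d : nat) (r : ray d) : nat := #|[pred c : cell d | on_ray r c]|.

Definition ncells (d : nat) : nat := #|{: cell d}|.

(* outcomes: k independent uniform draws from C (with replacement) *)
Definition draw (d k : nat) := {ffun 'I_k -> cell d}.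

Definition Xr (d k : nat) (r : ray d) (w : draw d k) : bool :=
  [forall j, ~~ on_ray r (w j)].

Definition Xcount (d k : nat) (w : draw d k) : nat := \sum_(r : ray d) Xr r w.

Local Open Scope R_scope.

Definition NR0 (d k : nat) : R :=
  \big[Rplus/R0]_(r : ray d)
     pow (Rminus R1 (Rdiv (INR (ray_size r)) (INR (ncells d)))) k.

Definition prob (d k : nat) (E : pred (draw d k)) : R :=
  Rdiv (INR #|E|) (INR #|{: draw d k}|).

Definition pbar (d : nat) : R :=
  Rminus 1 (Rdiv (Rmult 2 (Rplus (INR d) 1))
                   (Rplus (Rmult 3%R (pow (INR d) 2)) 1)).

(* Main.v *)
Require Import Defs.
From Stdlib Require Import Reals Lra Lia ZArith.
From Coquelicot Require Import Coquelicot.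
From mathcomp Require Import all_boot all_order all_algebra.
From mathcomp Require Import Rstruct zify.
Set Warnings "-notation-overridden,-ambiguous-paths".
Import GRing.Theory Num.Theory.
Open Scope nat_scope.

Lemma hd_of_odd d : odd d -> d = 2 * ((d - 1)./2) + 1.
Proof.
move=> od; have := odd_double_half d; rewrite od /= => e.
have -> : (d - 1)./2 = d./2 by rewrite -{1}e add1n subn1 /= doubleK.
move: e; rewrite -muln2; lia.
Qed.

Lemma inC_nat d (x : 'I_d * 'I_d) : d = 2 * ((d - 1)./2) + 1 ->
  inC x = ((d - 1)./2 <= x.1 + x.2 <= 3 * ((d - 1)./2))%N.
Proof.
move=> hd; rewrite /inC /crd /hh.
move: (ltn_ord x.1) (ltn_ord x.2); move: (nat_of_ord x.1) (nat_of_ord x.2) => a b.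
set h := (d - 1)./2 => ha hb.
case: Z.leb_spec; case: Z.leb_spec; case: Z.leb_spec; case: leqP; case: leqP => /=; lia.
Qed.

Lemma sum_cell d (F : 'I_d * 'I_d -> nat) :
  \sum_(c : cell d) F (val c) = \sum_(x | inC x) F x.
Proof.
rewrite (reindex_omap (val : cell d -> _) insub); last first.
  by move=> i Pi; rewrite insubT.
by apply: eq_bigl=> -[i iA]/=; rewrite insubT ?iA /= eqxx.
Qed.

Lemma Lcount n (b : bool) lo hi :
  \sum_(i < n) (b && (lo <= i <= hi)) = b * (minn hi.+1 n - lo).
Proof.
elim: n => [|n IH]; first by rewrite big_ord0; lia.
rewrite big_ord_recr /= IH; case: b IH => /= IH; last by lia.
case: leqP; case: leqP => /=; lia.
Qed.

Lemma hexsum h n : n <= 2 * h + 1 ->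
  2 * \sum_(x < n) (minn (3 * h - x).+1 (2 * h + 1) - (h - x)) =
  if n <= h then n * (2 * h + 1 + n)
  else 3 * h * h + h + 2 * (n - h) * (2 * h + 1) - (n - h) * (n - h - 1).
Proof.
elim: n => [|n IH] hn; first by rewrite big_ord0.
rewrite big_ord_recr /= mulnDr IH; last by lia.
have fv : minn (3 * h - n).+1 (2 * h + 1) - (h - n) = (if n <= h then h + 1 + n else 3 * h + 1 - n) by case: ifP; lia.
rewrite fv.
case: (leqP n.+1 h) => h1.
  have h2 : n <= h by lia.
  rewrite h2; nia.
case: (leqP n h) => h2.
  have e : n = h by lia.
  subst n; rewrite subSn // subnn; nia.
have [m em] : exists m, n = h + m.+1 by exists (n - h).-1; lia.
subst n.
have -> : h + m.+1 - h = m.+1 by lia.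
have -> : (h + m.+1).+1 - h = m.+2 by lia.
have hm : m.+1 <= h by lia.
have -> : 3 * h + 1 - (h + m.+1) = 2 * h - m by lia.
nia.
Qed.

Definition hN d := (d - 1)./2.

Lemma ncells_sum d : ncells d = \sum_(x1 < d) \sum_(x2 < d) inC (x1, x2).
Proof.
rewrite /ncells card_sig -sum1_card big_mkcond /=.
rewrite pair_bigA /=; apply: eq_bigr => -[x1 x2] _ /=.
by rewrite inE; case: (inC _).
Qed.

Lemma ncells_eq d : odd d -> 4 * ncells d = 3 * d ^ 2 + 1.
Proof.
move=> od; have hd := hd_of_odd d od.
rewrite ncells_sum.
rewrite (eq_bigr (fun x1 : 'I_d => minn (3 * hN d - x1).+1 (2 * hN d + 1) - (hN d - x1))); last first.
  move=> x1 _.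
  rewrite (eq_bigr (fun x2 : 'I_d => nat_of_bool (true && (hN d - x1 <= x2 <= 3 * hN d - x1)))); last first.
    move=> x2 _; congr nat_of_bool; rewrite inC_nat //= /hN.
    have := ltn_ord x1; have := ltn_ord x2.
    move=> h2 h1; by apply/idP/idP => /andP[? ?]; apply/andP; split; lia.
  by rewrite (Lcount d true) mul1n -hd.
have := hexsum (hN d) d ltac:(rewrite /hN; lia).
rewrite (_ : d <= hN d = false); last by rewrite /hN; lia.
rewrite /hN; move=> e.
move: e; move: (\sum_(x < d) _) => S.
move: ((d - 1)./2) hd => h hd'; rewrite hd'.
have -> : 2 * h + 1 - h = h.+1 by lia.
have -> : h.+1 - 1 = h by lia.
have -> : 3 * h * h + h + 2 * h.+1 * (2 * h + 1) - h.+1 * h = 2 * (3 * h * h + 3 * h + 1).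
  rewrite !mulSn !mulnS !mulnDr !mulnDl; lia.
move=> e.
have -> : (2 * h + 1) ^ 2 = 4 * h * h + 4 * h + 1.
  rewrite expnS expn1 !mulnDr !mulnDl; lia.
lia.
Qed.

Lemma crd_eqb d (u a : 'I_d) : Z.eqb (crd u) (crd a) = (u == a).
Proof.
rewrite /crd; case: Z.eqb_spec => h; case: eqP => // e.
  by exfalso; apply: e; apply: val_inj => /=; lia.
by exfalso; apply: h; rewrite e.
Qed.

Lemma crd_eqb2 d (x1 x2 a : 'I_d) : Z.eqb (Z.add (crd x1) (crd x2)) (crd a) = (x1 + x2 == a + hN d).
Proof.
rewrite /crd /hh /hN; case: Z.eqb_spec => h; case: eqP => // e; exfalso; lia.
Qed.

Definition onr d (r : ray d) (x : 'I_d * 'I_d) : bool :=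
  match nat_of_ord r.1 with
  | 0 => Z.eqb (crd x.1) (crd r.2)
  | 1 => Z.eqb (crd x.2) (crd r.2)
  | _ => Z.eqb (Z.add (crd x.1) (crd x.2)) (crd r.2)
  end.

Arguments onr {d}.

Lemma on_ray_onr d (r : ray d) (c : cell d) : on_ray r c = onr r (val c).
Proof. by []. Qed.

Lemma ray_size_sum d (r : ray d) :
  ray_size r = \sum_(x1 < d) \sum_(x2 < d) (inC (x1, x2) && onr r (x1, x2)).
Proof.
rewrite /ray_size -sum1_card big_mkcond /=.
rewrite (eq_bigr (fun c : cell d => nat_of_bool (onr r (val c)))); last first.
  by move=> c _; rewrite inE on_ray_onr; case: (onr _ _).
rewrite (sum_cell d (fun x => nat_of_bool (onr r x))) big_mkcond pair_bigA /=; apply: eq_bigr => -[x1 x2] _ /=.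
by case: (inC _).
Qed.

Lemma inner_count d (x1 : 'I_d) : odd d ->
  \sum_(x2 < d) inC (x1, x2) = minn (3 * hN d - x1).+1 d - (hN d - x1).
Proof.
move=> od; have hd := hd_of_odd d od.
rewrite (eq_bigr (fun x2 : 'I_d => nat_of_bool (true && (hN d - x1 <= x2 <= 3 * hN d - x1)))); last first.
  move=> x2 _; congr nat_of_bool; rewrite inC_nat //= /hN.
  have := ltn_ord x1; have := ltn_ord x2.
  move=> h2 h1; by apply/idP/idP => /andP[? ?]; apply/andP; split; lia.
by rewrite (Lcount d true) mul1n.
Qed.

Lemma inC_swap d (x1 x2 : 'I_d) : odd d -> inC (x1, x2) = inC (x2, x1).
Proof. move=> od; have hd := hd_of_odd d od; by rewrite !inC_nat //= addnC. Qed.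

Lemma ray_size_ge d (r : ray d) : odd d -> hN d + 1 <= ray_size r.
Proof.
move=> od; have hd := hd_of_odd d od.
rewrite ray_size_sum; case: r => [[[|[|[|i]]] hi] a] //=; rewrite /onr /=.
- rewrite (bigD1 a) //=; apply: leq_trans (leq_addr _ _).
  rewrite (eq_bigr (fun x2 : 'I_d => nat_of_bool (inC (a, x2)))); last first.
    by move=> x2 _; rewrite crd_eqb eqxx andbT.
  rewrite inner_count //; have := ltn_ord a; rewrite /hN; lia.
- rewrite exchange_big (bigD1 a) //=; apply: leq_trans (leq_addr _ _).
  rewrite (eq_bigr (fun x1 : 'I_d => nat_of_bool (inC (a, x1)))); last first.
    by move=> x1 _; rewrite crd_eqb eqxx andbT inC_swap.
  rewrite inner_count //; have := ltn_ord a; rewrite /hN; lia.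
- rewrite (eq_bigr (fun x1 : 'I_d => nat_of_bool (true && (a - hN d <= x1 <= a + hN d)))); last first.
    move=> x1 _.
    rewrite (eq_bigr (fun x2 : 'I_d => nat_of_bool ((x1 <= a + hN d) && (a + hN d - x1 <= x2 <= a + hN d - x1)))); last first.
      move=> x2 _; congr nat_of_bool; rewrite crd_eqb2 inC_nat //= /hN.
      have := ltn_ord x1; have := ltn_ord x2; have := ltn_ord a.
      move=> h3 h2 h1.
      apply/idP/idP.
        move=> /andP[/andP[? ?] /eqP ?]; apply/andP; split; [|apply/andP; split]; lia.
      move=> /andP[? /andP[? ?]]; apply/andP; split; [apply/andP; split|apply/eqP]; lia.
    rewrite Lcount; have := ltn_ord a; have := ltn_ord x1; rewrite /hN.
    move=> h1 h2 /=.
    case: (leqP x1 (a + (d - 1)./2)) => H1; case: (leqP (a - (d - 1)./2) x1) => H2 /=; lia.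
  rewrite (Lcount d true); have := ltn_ord a; rewrite /hN; lia.
Qed.

Lemma sum_eqb_le1 d z : \sum_(a : 'I_d) Z.eqb z (crd a) <= 1.
Proof.
case: (pickP (fun a : 'I_d => Z.eqb z (crd a))) => [a0 H0 | H0].
  rewrite (bigD1 a0) //= H0 big1 //.
  move=> a ne; move/Z.eqb_eq: H0 => ->.
  by rewrite crd_eqb eq_sym (negbTE ne).
by rewrite big1 // => a _; rewrite H0.
Qed.

Lemma ray_size_card d (r : ray d) : ray_size r = \sum_(c : cell d) on_ray r c.
Proof.
rewrite /ray_size -sum1_card big_mkcond /=; apply: eq_bigr => c _.
by rewrite inE; case: (on_ray r c).
Qed.

Lemma rays_through d (c : cell d) : \sum_(r : ray d) on_ray r c <= 3.
Proof.
rewrite (eq_bigr (fun p : ray d => nat_of_bool (onr (p.1, p.2) (val c)))); last first.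
  by move=> [i a] _.
rewrite -(pair_bigA _ (fun i a => nat_of_bool (onr (i, a) (val c)))) /=.
apply: leq_trans (_ : \sum_(i : 'I_3) 1 <= 3); last by rewrite sum1_card card_ord.
apply: leq_sum => i _; rewrite /onr /=.
by case: (nat_of_ord i) => [|[|n]]; apply: sum_eqb_le1.
Qed.

Lemma sum_ray_size d : \sum_(r : ray d) ray_size r <= 3 * ncells d.
Proof.
rewrite (eq_bigr _ (fun r _ => ray_size_card d r)) exchange_big /=.
apply: leq_trans (_ : \sum_(c : cell d) 3 <= _).
  by apply: leq_sum => c _; apply: rays_through.
by rewrite sum_nat_const mulnC.
Qed.

Lemma ncells_pos d : odd d -> 0 < ncells d.
Proof. move=> od; have := ncells_eq d od; lia. Qed.

Lemma ray_size_le d (r : ray d) : ray_size r <= ncells d.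
Proof. exact: max_card. Qed.
Open Scope R_scope.
Open Scope R_scope.

Definition Hf x := x * (exp x + exp (-x)) - (exp x - exp (-x)).

Lemma Hf_der x : derivable_pt_lim Hf x (x * (exp x - exp (-x))).
Proof. apply/is_derive_Reals; rewrite /Hf; auto_derive; [done|ring]. Qed.

Lemma exp_neg_le x : 0 <= x -> exp (- x) <= exp x.
Proof. move=> h; case: (Req_dec x 0) => [->|nz]; first by rewrite Ropp_0; lra.
apply/Rlt_le/exp_increasing; lra. Qed.

Lemma Hf_nonneg x : 0 <= x -> 0 <= Hf x.
Proof.
move=> hx. case: (Req_dec x 0) => [->|nz].
  rewrite /Hf Ropp_0 exp_0; lra.
have xp : 0 < x by lra.
have [c [Hc Hc']] := MVT_cor2 Hf (fun x => x * (exp x - exp (-x))) 0 x xp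
  (fun c _ => Hf_der c).
move: Hc; rewrite /Hf Ropp_0 exp_0 /=.
have := exp_neg_le c ltac:(lra) => h1 h2.
have h3 : 0 <= c * (exp c - exp (- c)) by apply: Rmult_le_pos; lra.
have h4 : 0 <= c * (exp c - exp (- c)) * (x - 0) by apply: Rmult_le_pos; lra.
lra.
Qed.

Definition Lf x := (exp x + exp (-x)) * exp (- (x * x) / 2).

Lemma Lf_der x : derivable_pt_lim Lf x (- (exp (- (x * x) / 2)) * Hf x).
Proof. apply/is_derive_Reals; rewrite /Lf /Hf; auto_derive; [done|]. rewrite /Rdiv; field. Qed.

Lemma cosh_le_pos x : 0 <= x -> exp x + exp (-x) <= 2 * exp (x * x / 2).
Proof.
move=> hx. case: (Req_dec x 0) => [->|nz].
  rewrite Ropp_0 Rmult_0_l /Rdiv Rmult_0_l exp_0; lra.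
have xp : 0 < x by lra.
have [c [Hc Hc']] := MVT_cor2 Lf (fun x => - (exp (- (x * x) / 2)) * Hf x) 0 x xp
  (fun c _ => Lf_der c).
have e0 : Lf 0 = 2.
  rewrite /Lf Ropp_0 exp_0 (_ : - (0 * 0) / 2 = 0) ?exp_0; [ring|field].
rewrite e0 in Hc.
have := Hf_nonneg c ltac:(lra).
have := exp_pos (- (c * c) / 2).
move=> h1 h2.
have h3 : 0 <= exp (- (c * c) / 2) * Hf c * (x - 0) by apply: Rmult_le_pos; [apply: Rmult_le_pos|]; lra.
have h4 : Lf x <= 2 by lra.
move: h4; rewrite /Lf => h4.
have e : exp (- (x * x) / 2) * exp (x * x / 2) = 1.
  by rewrite -exp_plus -(exp_0); congr exp; field.
have h5 := exp_pos (x * x / 2).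
have : (exp x + exp (- x)) * exp (- (x * x) / 2) * exp (x * x / 2) <= 2 * exp (x * x / 2)
  by apply: Rmult_le_compat_r; lra.
rewrite Rmult_assoc e; lra.
Qed.

Lemma cosh_le x : exp x + exp (-x) <= 2 * exp (x * x / 2).
Proof.
case: (Rle_dec 0 x) => h; first exact: cosh_le_pos.
have := cosh_le_pos (- x) ltac:(lra). rewrite Ropp_involutive.
have -> : - x * - x = x * x by ring. lra.
Qed.

Lemma chord (lam c y : R) : 0 < c -> Rabs y <= c ->
  exp (lam * y) <= (c - y) / (2 * c) * exp (- (lam * c)) + (c + y) / (2 * c) * exp (lam * c).
Proof.
move=> cp /Rabs_le_between hy.
set z := lam * y.
have ea : exp (- (lam * c)) = exp z * exp (- (lam * c) - z) by rewrite -exp_plus; congr exp; ring.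
have eb : exp (lam * c) = exp z * exp (lam * c - z) by rewrite -exp_plus; congr exp; ring.
have i1 := exp_ineq1_le (- (lam * c) - z).
have i2 := exp_ineq1_le (lam * c - z).
have ez := exp_pos z.
have t1 : 0 <= (c - y) / (2 * c) by apply: Rmult_le_pos; [lra| apply/Rlt_le/Rinv_0_lt_compat; lra].
have t2 : 0 <= (c + y) / (2 * c) by apply: Rmult_le_pos; [lra| apply/Rlt_le/Rinv_0_lt_compat; lra].
rewrite ea eb.
have key : (c - y) / (2 * c) * (1 + (- (lam * c) - z)) + (c + y) / (2 * c) * (1 + (lam * c - z)) = 1.
  rewrite /z; field; lra.
have k1 : (c - y) / (2 * c) * exp z * (1 + (- (lam * c) - z)) <= (c - y) / (2 * c) * (exp z * exp (- (lam * c) - z)).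
  rewrite Rmult_assoc; apply: Rmult_le_compat_l => //; apply: Rmult_le_compat_l; lra.
have k2 : (c + y) / (2 * c) * exp z * (1 + (lam * c - z)) <= (c + y) / (2 * c) * (exp z * exp (lam * c - z)).
  rewrite Rmult_assoc; apply: Rmult_le_compat_l => //; apply: Rmult_le_compat_l; lra.
have : exp z = exp z * ((c - y) / (2 * c) * (1 + (- (lam * c) - z)) + (c + y) / (2 * c) * (1 + (lam * c - z))) by rewrite key; ring.
lra.
Qed.

Lemma sum_Rle (T : finType) (F G : T -> R) :
  (forall t, F t <= G t) -> \big[Rplus/R0]_(t : T) F t <= \big[Rplus/R0]_(t : T) G t.
Proof. move=> h; apply/RleP; apply: ler_sum => t _; apply/RleP; exact: h. Qed.

Lemma sum_const_R (T : finType) (x : R) : \big[Rplus/R0]_(t : T) x = INR #|T| * x.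
Proof. by rewrite (sumr_const T) INRE RmultE mulr_natl. Qed.

Lemma sum_plus_R (T : finType) (F G : T -> R) :
  \big[Rplus/R0]_(t : T) (F t + G t) = \big[Rplus/R0]_(t : T) F t + \big[Rplus/R0]_(t : T) G t.
Proof. exact: big_split. Qed.

Lemma sum_multr_R (T : finType) (F : T -> R) (a : R) :
  \big[Rplus/R0]_(t : T) (F t * a) = (\big[Rplus/R0]_(t : T) F t) * a.
Proof. by rewrite RmultE mulr_suml. Qed.

Lemma sum_multl_R (T : finType) (F : T -> R) (a : R) :
  \big[Rplus/R0]_(t : T) (a * F t) = a * (\big[Rplus/R0]_(t : T) F t).
Proof. by rewrite RmultE mulr_sumr. Qed.

Lemma hoeff (T : finType) (D : T -> R) (c lam : R) : 0 < c ->
  (forall t, Rabs (D t) <= c) -> \big[Rplus/R0]_(t : T) D t = 0 ->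
  \big[Rplus/R0]_(t : T) exp (lam * D t) <= INR #|T| * exp (lam * c * (lam * c) / 2).
Proof.
move=> cp hD h0.
apply: Rle_trans (@sum_Rle _ _ _ (fun t => chord lam c (D t) cp (hD t))) _.
rewrite (eq_bigr (fun t => (exp (- (lam * c)) + exp (lam * c)) / 2 +
   D t * ((exp (lam * c) - exp (- (lam * c))) / (2 * c)))); last first.
  move=> t _; rewrite /=; field; lra.
rewrite sum_plus_R sum_const_R sum_multr_R h0.
have := cosh_le (lam * c).
have := pos_INR #|T|.
rewrite Rmult_0_l Rplus_0_r.
move=> h1 h2.
have h3 : (exp (- (lam * c)) + exp (lam * c)) / 2 <= exp (lam * c * (lam * c) / 2) by lra.
by apply: Rmult_le_compat_l.
Qed.

Definition qr d (r : ray d) : R := 1 - INR (ray_size r) / INR (ncells d).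
Arguments qr {d}.
Definition rs d (c : cell d) : {set ray d} := [set r | on_ray r c].
Arguments rs {d}.
Definition Gk d k (S : {set ray d}) (w : draw d k) : nat :=
  (\sum_(r : ray d) ((r \notin S) && Xr r w))%N.
Arguments Gk {d k}.
Definition mk d k (S : {set ray d}) : R :=
  \big[Rplus/R0]_(r : ray d) (if r \in S then 0 else qr r ^ k).
Arguments mk {d}.
Definition consf d k (c : cell d) (w : draw d k) : draw d k.+1 :=
  [ffun i => if unlift ord0 i is Some j then w j else c].
Arguments consf {d k}.
Fixpoint Vk (p : R) k := match k with
  | 0 => 0 | S k' => Vk p k' + (3 * p ^ k') * (3 * p ^ k') end.

Lemma Xr_cons d k r c (w : draw d k) : Xr r (consf c w) = ~~ on_ray r c && Xr r w.
Proof.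
rewrite /Xr; apply/forallP/andP => [H | [H1 /forallP H2] i].
  split; first by have := H ord0; rewrite ffunE unlift_none.
  by apply/forallP => j; have := H (lift ord0 j); rewrite ffunE liftK.
by rewrite ffunE; case: unliftP => [j _|_] //=; apply: H2.
Qed.

Lemma Gk_cons d k S c (w : draw d k) : Gk S (consf c w) = Gk (S :|: rs c) w.
Proof.
rewrite /Gk; apply: eq_bigr => r _.
by rewrite Xr_cons in_setU inE negb_or andbA.
Qed.

Lemma sum_draw_S d k (F : draw d k.+1 -> R) :
  \big[Rplus/R0]_(w : draw d k.+1) F w =
  \big[Rplus/R0]_(c : cell d) \big[Rplus/R0]_(w : draw d k) F (consf c w).
Proof.
rewrite pair_big /=.
rewrite (reindex (fun p : cell d * draw d k => consf p.1 p.2)) //=.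
apply: onW_bij.
exists (fun w : draw d k.+1 => (w ord0, [ffun j => w (lift ord0 j)])).
  move=> [c w] /=; congr pair; first by rewrite ffunE unlift_none.
  by apply/ffunP => j; rewrite !ffunE liftK.
move=> w; apply/ffunP => i; rewrite ffunE /=.
by case: unliftP => [j ->|->]; rewrite ?ffunE.
Qed.

Lemma INR_sum (T : finType) (F : T -> nat) :
  INR (\sum_(t : T) F t)%N = \big[Rplus/R0]_(t : T) INR (F t).
Proof.
rewrite INRE natr_sum; apply: eq_bigr => t _; by rewrite INRE.
Qed.

Lemma N_pos d : odd d -> 0 < INR (ncells d).
Proof. move=> od; apply: lt_0_INR; apply/ltP; exact: ncells_pos. Qed.

Lemma qr_nonneg d (r : ray d) : odd d -> 0 <= qr r.
Proof.
move=> od; have Np := N_pos d od; rewrite /qr.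
have h : INR (ray_size r) <= INR (ncells d) by apply: le_INR; apply/leP; exact: (ray_size_le d r).
have : INR (ray_size r) / INR (ncells d) <= 1.
  apply: (Rmult_le_reg_r (INR (ncells d))) => //.
  rewrite /Rdiv Rmult_assoc Rinv_l; lra.
lra.
Qed.

Lemma qr_le_p d (r : ray d) : odd d -> qr r <= pbar d.
Proof.
move=> od; have Np := N_pos d od; rewrite /qr /pbar.
have e4 := ncells_eq d od; have hr := ray_size_ge d r od; have hd := hd_of_odd d od.
have hn : (2 * (d + 1) * ncells d <= ray_size r * (3 * d ^ 2 + 1))%N.
  rewrite -e4; move: hr hd; rewrite /hN; move: ((d - 1)./2) => h hr hd.
  rewrite mulnCA mulnA; apply: leq_mul => //; lia.
move: hn; rewrite -mulnn => hn.
have := le_INR _ _ (elimT leP hn).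
rewrite !mult_INR !plus_INR !mult_INR /=.
move: (INR (ray_size r)) (INR (ncells d)) (INR d) Np => x N D Np H.
have D2 : 0 < 3 * D ^ 2 + 1 by have := pow2_ge_0 D; simpl; nra.
have : 2 * (D + 1) / (3 * D ^ 2 + 1) <= x / N.
  have e : x / N - 2 * (D + 1) / (3 * D ^ 2 + 1) = (x * (3 * D ^ 2 + 1) - 2 * (D + 1) * N) / (N * (3 * D ^ 2 + 1)) by field; lra.
  have : 0 <= (x * (3 * D ^ 2 + 1) - 2 * (D + 1) * N) / (N * (3 * D ^ 2 + 1)).
    apply: Rmult_le_pos; first by simpl in H |- *; lra.
    by apply/Rlt_le/Rinv_0_lt_compat/Rmult_lt_0_compat.
  lra.
simpl in *; rewrite /Rminus; lra.
Qed.

Lemma pbar_pos d : (3 <= d)%N -> 0 < pbar d.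
Proof.
move=> h3; have := le_INR _ _ (elimT leP h3); rewrite /pbar /= => H.
have D2 : 0 < 3 * (INR d * (INR d * 1)) + 1 by nra.
have : 2 * (INR d + 1) / (3 * (INR d * (INR d * 1)) + 1) < 1.
  apply: (Rmult_lt_reg_r (3 * (INR d * (INR d * 1)) + 1)) => //.
  rewrite /Rdiv Rmult_assoc Rinv_l; nra.
lra.
Qed.

Lemma pbar_lt1 d : (3 <= d)%N -> pbar d < 1.
Proof.
move=> h3; have := le_INR _ _ (elimT leP h3); rewrite /pbar /= => H.
have D2 : 0 < 3 * (INR d * (INR d * 1)) + 1 by nra.
have : 0 < 2 * (INR d + 1) / (3 * (INR d * (INR d * 1)) + 1).
  apply: Rmult_lt_0_compat; [lra | exact: Rinv_0_lt_compat].
lra.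
Qed.

Lemma sum_minus_R (T : finType) (F G : T -> R) :
  \big[Rplus/R0]_(t : T) (F t - G t) = \big[Rplus/R0]_(t : T) F t - \big[Rplus/R0]_(t : T) G t.
Proof. by rewrite big_split /= sumrN. Qed.

Lemma sum_on_ray d (r : ray d) :
  \big[Rplus/R0]_(c : cell d) INR (on_ray r c) = INR (ray_size r).
Proof. by rewrite ray_size_card INR_sum. Qed.

Lemma N_qr d (r : ray d) : odd d -> INR (ncells d) * qr r = INR (ncells d) - INR (ray_size r).
Proof. move=> od; have := N_pos d od; rewrite /qr => h; field; lra. Qed.

Lemma Dsum d k (S : {set ray d}) : odd d ->
  \big[Rplus/R0]_(c : cell d) (mk k (S :|: rs c) - mk k.+1 S) = 0.
Proof.
move=> od; rewrite sum_minus_R sum_const_R /mk exchange_big /= -sum_multl_R -sum_minus_R.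
apply: big1 => r _.
case: (boolP (r \in S)) => rS.
  rewrite big1 ?Rmult_0_r ?Rminus_0_r // => c _; by rewrite in_setU rS.
rewrite (eq_bigr (fun c => qr r ^ k * (1 - INR (on_ray r c)))); last first.
  move=> c _; rewrite in_setU (negbTE rS) inE /=; case: (on_ray r c) => /=; ring.
rewrite sum_multl_R sum_minus_R sum_const_R sum_on_ray Rmult_1_r.
have e := N_qr d r od; move: e.
rewrite /ncells; move: (INR #|_|) => M e.
have -> : M * (qr r * qr r ^ k) = (M * qr r) * qr r ^ k by ring.
rewrite e. ring.
Qed.


Lemma Dbound d k (S : {set ray d}) (c : cell d) : odd d -> (3 <= d)%N ->
  Rabs (mk k (S :|: rs c) - mk k.+1 S) <= 3 * pbar d ^ k.
Proof.
move=> od d3.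
have Np := N_pos d od.
have pp := pbar_pos d d3.
have pk : 0 <= pbar d ^ k by apply: pow_le; lra.
rewrite /mk -sum_minus_R.
pose t := fun r : ray d => (if r \in S :|: rs c then 0 else qr r ^ k) - (if r \in S then 0 else qr r ^ k.+1).
change (Rabs (\big[Rplus/R0]_(r : ray d) t r) <= 3 * pbar d ^ k).
have qb (r : ray d) : 0 <= qr r <= pbar d by split; [apply: (qr_nonneg d r od) | apply: (qr_le_p d r od)].
have q1 (r : ray d) : qr r <= 1 by have := qb r; have := pbar_lt1 d d3; lra.
have qk (r : ray d) : 0 <= qr r ^ k <= pbar d ^ k.
  by split; [apply: pow_le; have := qb r; lra | apply: pow_incr; apply: qb].
have up (r : ray d) : t r <= pbar d ^ k * (INR (ray_size r) / INR (ncells d)).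
  rewrite /t in_setU inE.
  have e : INR (ray_size r) / INR (ncells d) = 1 - qr r by rewrite /qr; ring.
  rewrite e; have := qb r; have := qk r; have := q1 r.
  case: (r \in S) => /=.
    move=> *; rewrite Rminus_0_r; apply: Rmult_le_pos; lra.
  case: (on_ray r c) => /= *.
    have : 0 <= qr r * qr r ^ k by apply: Rmult_le_pos; lra.
    have : 0 <= pbar d ^ k * (1 - qr r) by apply: Rmult_le_pos; lra.
    lra.
  have : qr r ^ k * (1 - qr r) <= pbar d ^ k * (1 - qr r) by apply: Rmult_le_compat_r; lra.
  lra.
have lo (r : ray d) : - (pbar d ^ k * INR (on_ray r c)) <= t r.
  rewrite /t in_setU inE; have := qb r; have := qk r; have := q1 r.
  case: (r \in S) => /=.
    move=> *; rewrite Rminus_0_r; case: (on_ray r c) => /=; lra.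
  case: (on_ray r c) => /= *.
    have : qr r * qr r ^ k <= 1 * qr r ^ k by apply: Rmult_le_compat_r; lra.
    lra.
  have : qr r * qr r ^ k <= 1 * qr r ^ k by apply: Rmult_le_compat_r; lra.
  lra.
apply: Rabs_le; split.
  apply: Rle_trans (@sum_Rle _ _ _ lo).
  rewrite sumrN sum_multl_R.
  have h3 := rays_through d c.
  have : INR (\sum_(r : ray d) on_ray r c)%N <= 3.
    have -> : 3 = INR 3 by simpl; lra.
    by apply: le_INR; apply/leP.
  rewrite INR_sum => h.
  have : pbar d ^ k * \big[Rplus/R0]_(r : ray d) INR (on_ray r c) <= pbar d ^ k * 3 by apply: Rmult_le_compat_l.
  have oppE : forall x : R, GRing.opp x = Ropp x by [].
  rewrite oppE => h4.
  set s := \big[Rplus/R0]_(r : ray d) INR (on_ray r c) in h4 *.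
  lra.
apply: Rle_trans (@sum_Rle _ _ _ up) _.
rewrite sum_multl_R.
have h3 := sum_ray_size d.
have : INR (\sum_(r : ray d) ray_size r)%N <= 3 * INR (ncells d).
  have -> : 3 * INR (ncells d) = INR (3 * ncells d) by rewrite mult_INR; simpl; ring.
  by apply: le_INR; apply/leP.
rewrite INR_sum => h.
have e : \big[Rplus/R0]_(r : ray d) (INR (ray_size r) / INR (ncells d)) =
   (\big[Rplus/R0]_(r : ray d) INR (ray_size r)) * / INR (ncells d) by rewrite -sum_multr_R.
rewrite e.
set s := \big[Rplus/R0]_(r : ray d) INR (ray_size r) in h *.
have : s * / INR (ncells d) <= 3.
  apply: (Rmult_le_reg_r (INR (ncells d))) => //.
  rewrite Rmult_assoc Rinv_l; lra.
move=> h'.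
have : pbar d ^ k * (s * / INR (ncells d)) <= pbar d ^ k * 3 by apply: Rmult_le_compat_l.
lra.
Qed.

Lemma card_draw d k : #|{: draw d k}| = (ncells d ^ k)%N.
Proof. by rewrite card_ffun card_ord. Qed.

Lemma mgf d k (S : {set ray d}) lam : odd d -> (3 <= d)%N ->
  \big[Rplus/R0]_(w : draw d k) exp (lam * (INR (Gk S w) - mk k S)) <=
  INR (ncells d) ^ k * exp (lam * lam * Vk (pbar d) k / 2).
Proof.
move=> od d3; elim: k S => [|k IH] S.
  rewrite (eq_bigr (fun _ => 1)); last first.
    move=> w _; rewrite /Gk /mk INR_sum.
    rewrite (eq_bigr (fun r : ray d => if r \in S then 0 else qr r ^ 0)).
      by rewrite Rminus_diag_eq // Rmult_0_r exp_0.
    move=> r _; have -> : Xr r w by apply/forallP => -[].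
    by case: (r \in S).
  rewrite sum_const_R card_draw /= Rmult_0_r /Rdiv Rmult_0_l exp_0; lra.
rewrite sum_draw_S.
have pp := pbar_pos d d3.
set E := exp (lam * lam * Vk (pbar d) k / 2).
have step c : \big[Rplus/R0]_(w : draw d k) exp (lam * (INR (Gk S (consf c w)) - mk k.+1 S)) <=
    INR (ncells d) ^ k * E * exp (lam * (mk k (S :|: rs c) - mk k.+1 S)).
  rewrite (eq_bigr (fun w => exp (lam * (INR (Gk (S :|: rs c) w) - mk k (S :|: rs c))) *
                             exp (lam * (mk k (S :|: rs c) - mk k.+1 S)))); last first.
    by move=> w _; rewrite Gk_cons -exp_plus; congr exp; ring.
  rewrite sum_multr_R; apply: Rmult_le_compat_r; first exact/Rlt_le/exp_pos.
  exact: IH.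
apply: Rle_trans (@sum_Rle _ _ _ step) _.
rewrite sum_multl_R.
have H := hoeff _ (fun c => mk k (S :|: rs c) - mk k.+1 S) (3 * pbar d ^ k) lam
   ltac:(apply: Rmult_lt_0_compat; [lra | exact: pow_lt])
   (fun c => Dbound d k S c od d3) (Dsum d k S od).
have Np := N_pos d od.
have NE : 0 <= INR (ncells d) ^ k * E by apply: Rmult_le_pos; [apply: pow_le; lra | exact/Rlt_le/exp_pos].
apply: Rle_trans (Rmult_le_compat_l _ _ _ NE H) _.
rewrite -/(ncells d) /E /=.
have -> : lam * lam * (Vk (pbar d) k + 3 * pbar d ^ k * (3 * pbar d ^ k)) / 2 =
  lam * lam * Vk (pbar d) k / 2 + lam * (3 * pbar d ^ k) * (lam * (3 * pbar d ^ k)) / 2 by field.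
rewrite exp_plus; apply: Req_le; ring.
Qed.

Lemma exp_mono x y : x <= y -> exp x <= exp y.
Proof. move=> h; case: (Req_dec x y) => [->|ne]; first lra. apply/Rlt_le/exp_increasing; lra. Qed.

Lemma Vk_formula p k : Vk p k * (1 - p * p) = 9 * (1 - (p * p) ^ k).
Proof.
elim: k => [|k IH] /=; first ring.
rewrite Rmult_plus_distr_r IH Rpow_mult_distr; ring.
Qed.

Lemma Vk_ge0 p k : 0 <= Vk p k.
Proof.
elim: k => [|k IH] /=; first lra.
have := Rle_0_sqr (3 * p ^ k); rewrite /Rsqr; lra.
Qed.

Lemma Vk_pos p k : 0 < p -> (1 <= k)%N -> 0 < Vk p k.
Proof.
move=> pp; case: k => [//|k] _ /=.
have := Vk_ge0 p k.
have h : 0 < 3 * p ^ k by apply: Rmult_lt_0_compat; [lra|exact: pow_lt].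
have := Rmult_lt_0_compat _ _ h h; lra.
Qed.

Lemma INR_expn n k : INR (n ^ k)%N = INR n ^ k.
Proof. elim: k => [|k IH] //=; by rewrite expnS mult_INR IH. Qed.

Lemma NR0_mk d k : NR0 d k = mk k (set0 : {set ray d}).
Proof. by rewrite /NR0 /mk; apply: eq_bigr => r _; rewrite in_set0. Qed.

Lemma Xcount_Gk d k (w : draw d k) : Xcount w = Gk set0 w.
Proof. by rewrite /Xcount /Gk; apply: eq_bigr => r _; rewrite in_set0. Qed.

Theorem proposition3p5 (d k : nat) (delta : R) :
  odd d -> leq 3 d -> leq 1 k -> Rlt 0 delta ->
  Rle (prob (fun w : draw d k =>
           if Rle_dec delta (Rabs (Rminus (INR (Xcount w)) (NR0 d k))) then true else false))
      (Rmult 2 (exp (Rmult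
         (Ropp (Rdiv (Rminus 1 (pow (pbar d) 2))
                     (Rmult 18 (Rminus 1 (pow (pbar d) (muln 2 k))))))
         (pow delta 2)))).
Proof.
move=> od d3 k1 dp.
have pp := pbar_pos d d3; have p1 := pbar_lt1 d d3.
set p := pbar d.
set V := Vk p k.
have Vp : 0 < V by apply: Vk_pos.
have VF := Vk_formula p k.
have Np := N_pos d od.
set lam := delta / V.
have lp : 0 < lam by apply: Rdiv_lt_0_compat.
set E := fun w : draw d k => _.
set m := NR0 d k.
have key : INR #|E| * exp (lam * delta) <= 2 * (INR (ncells d) ^ k * exp (lam * lam * V / 2)).
  have -> : #|E| = (\sum_(w : draw d k) E w)%N.
    rewrite -sum1_card big_mkcond /=; apply: eq_bigr => w _; have -> : (w \in E) = E w by []. by case: (E w).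
  rewrite INR_sum -sum_multr_R.
  apply: Rle_trans (_ : _ <= \big[Rplus/R0]_(w : draw d k)
      (exp (lam * (INR (Gk set0 w) - mk k (set0 : {set ray d}))) + exp ((- lam) * (INR (Gk set0 w) - mk k (set0 : {set ray d}))))) _.
    apply: sum_Rle => w.
    rewrite /E -Xcount_Gk -NR0_mk -/m.
    have e1 := exp_pos (lam * (INR (Xcount w) - m)).
    have e2 := exp_pos (- lam * (INR (Xcount w) - m)).
    case: Rle_dec => h /=; last by lra.
    rewrite Rmult_1_l.
    move: h; rewrite /Rabs; case: Rcase_abs => s h.
      have : exp (lam * delta) <= exp (- lam * (INR (Xcount w) - m)).
        by apply: exp_mono; nra.
      lra.
    have : exp (lam * delta) <= exp (lam * (INR (Xcount w) - m)).
      by apply: exp_mono; nra.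
    lra.
  rewrite sum_plus_R.
  have h1 := mgf d k set0 lam od d3.
  have h2 := mgf d k set0 (- lam) od d3.
  move: h2; rewrite (_ : - lam * - lam = lam * lam); last ring.
  rewrite -/V -/p => h2; move: h1; rewrite -/p -/V => h1.
  apply: Rle_trans (Rplus_le_compat _ _ _ _ h1 h2) _; lra.
rewrite /prob card_draw INR_expn -/E.
have NkP : 0 < INR (ncells d) ^ k by apply: pow_lt.
have el := exp_pos (lam * delta).
apply: (Rmult_le_reg_r (INR (ncells d) ^ k)) => //.
rewrite /Rdiv Rmult_assoc Rinv_l; last lra.
rewrite Rmult_1_r.
apply: (Rmult_le_reg_r (exp (lam * delta))) => //.
apply: Rle_trans key _.
have ex : - ((1 - p ^ 2) / (18 * (1 - p ^ (2 * k)%N))) * delta ^ 2 + lam * delta = lam * lam * V / 2.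
  rewrite -multE pow_mult.
  have -> : p ^ 2 = p * p by simpl; ring.
  have hp2 : 0 < 1 - p * p by rewrite /p; nra.
  have e9 : 1 - (p * p) ^ k = V * (1 - p * p) / 9 by rewrite VF; field.
  rewrite e9 /lam; field; lra.
move: ex; rewrite /Rdiv => ex; rewrite -ex exp_plus.
apply: Req_le; ring.
Qed.
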